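(* There is an absolute constant $c>0$ such that the following holds. Let $r,r'>1$ be conjugate indices ($1/r+1/r'=1$), let $z\in\mathbb R^N$, and let $V\subset\mathbb R^N$ satisfy Structural Assumption A with $p=r'$ (for some integer $s_0\ge0$, admissible sequence $(V_s)$ with maps $\pi_s$, seminorms $\|\cdot\|_{[s]}$, $\|\cdot\|$, and integers $(j_s)_{s\ge s_0}$). Let $\varepsilon_1,\dots,\varepsilon_N$ be independent symmetric $\{-1,1\}$-valued random variables. Then for every $t\ge4$, with probability at least $1-2\exp(-ct^22^{s_0})$, for every $v\in V$, $$\left|\sum_{i=1}^N\varepsilon_iz_iv_i\right|\le2\|z\|_{\ell_2^N}\Lambda(V)+t\,\Theta(V)\,N^{1/2r'}\Big(\sum_{i\ge j_{s_0}}(z_i^* )^{2r}\Big)^{1/2r}.$$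
   Context: For $x\in\mathbb R^N$, $(x_i^* )_{i=1}^N$ is the nonincreasing rearrangement of $(|x_i|)_{i=1}^N$; empty sums are $0$. An admissible sequence of $V$ is a sequence of subsets $(V_s)_{s\ge0}$ with $|V_0|=1$, $|V_s|\le2^{2^s}$. Structural Assumption A (parameter $p\ge1$): $s_0\ge0$ is an integer, $(V_s)_{s\ge0}$ an admissible sequence of $V$, $\pi_s:V\to V_s$ maps, $\Delta_sv=\pi_{s+1}v-\pi_sv$, and for every $v\in V$, $v=\pi_{s_0}v+\sum_{s\ge s_0}\Delta_sv$ (convergent series). $(\|\cdot\|_{[s]})_{s\ge s_0}$ is a family of seminorms on $\mathbb R^N$ and $\|\cdot\|$ another seminorm on $\mathbb R^N$. $(j_s)_{s\ge s_0}$ is a nondecreasing sequence of integers with $1\le j_s\le N+1$. For every $s\ge s_0$ and $v\in V$: $\big(\sum_{i<j_s}((\Delta_sv)_i^* )^2\big)^{1/2}\le\|\Delta_sv\|_{[s]}$, $\big(\sum_{i\ge j_s}((\Delta_sv)_i^* )^{2p}\big)^{1/2p}\le\|\Delta_sv\|N^{1/2p}$, $\big(\sum_{i<j_s}((\pi_sv)_i^* )^2\big)^{1/2}\le\|\pi_sv\|_{[s]}$, $\big(\sum_{i\ge j_s}((\pi_sv)_i^* )^{2p}\big)^{1/2p}\le\|\pi_sv\|N^{1/2p}$. Set $\Lambda(V)=\sup_{v\in V}\big(\sum_{s\ge s_0}\|\Delta_sv\|_{[s]}+\|\pi_{s_0}v\|_{[s_0]}\big)$ and $\Theta(V)=\sup_{v\in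 V}\big(\sum_{s\ge s_0}2^{s/2}\|\Delta_sv\|+2^{s_0/2}\|\pi_{s_0}v\|\big)$. *)

(* Defs.v *)
From Stdlib Require Import Reals Lra Lia List ClassicalEpsilon.
Import ListNotations.
Open Scope R_scope.

(* Vectors of R^N are represented as functions nat -> R, coordinate i
   (0-based, i < N) being the paper's coordinate i+1; coordinates >= N vanish. *)
Definition vec := nat -> R.
Definition inRN (N : nat) (x : vec) : Prop := forall i, (N <= i)%nat -> x i = 0.

Definition vsub (x y : vec) : vec := fun i => x i - y i.
Definition vadd (x y : vec) : vec := fun i => x i + y i.
Definition vscal (a : R) (x : vec) : vec := fun i => a * x i.

Definition is_seminorm (N : nat) (nm : vec -> R) : Prop :=
  (forall x, inRN N x -> 0 <= nm x) /\
  (forall x y, inRN N x -> inRN N y -> nm (vadd x y) <= nm x + nm y) /\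
  (forall a x, inRN N x -> nm (vscal a x) = Rabs a * nm x).

(* sum_{k=m}^{n} f k ; empty (= 0) when n < m *)
Definition sumI (m n : nat) (f : nat -> R) : R :=
  fold_right (fun k acc => f k + acc) 0 (seq m (S n - m)).

Definition sumN (m n : nat) (f : nat -> R) : R :=
  fold_right (fun k acc => f k + acc) 0 (seq m n).

(* real power with the convention 0^b = 0 (used only for b > 0) *)
Definition rpow (a b : R) : R := if Rlt_dec 0 a then Rpower a b else 0.

Fixpoint insert_desc (a : R) (l : list R) : list R :=
  match l with
  | [] => [a]
  | b :: l' => if Rle_dec b a then a :: l else b :: insert_desc a l'
  end.
Definition sort_desc (l : list R) : list R := fold_right insert_desc [] l.

(* rearr N x k = x^*_k for 1 <= k <= N (paper's 1-based index) *)
Definition rearr (N : nat) (x : vec) (k : nat) : R :=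
  nth (k - 1) (sort_desc (map (fun i => Rabs (x i)) (seq 0 N))) 0.

Definition l2norm (N : nat) (x : vec) : R := sqrt (sumN 0 N (fun i => x i ^ 2)).

(* "|A| <= k" for a possibly infinite set of vectors *)
Definition card_le (A : vec -> Prop) (k : nat) : Prop :=
  exists l : list vec, (length l <= k)%nat /\ forall x, A x -> In x l.
Definition card_eq1 (A : vec -> Prop) : Prop :=
  exists x0, forall x, A x <-> x = x0.

Definition StructA (N : nat) (p : R) (V : vec -> Prop) (s0 : nat)
  (Vs : nat -> vec -> Prop) (pi : nat -> vec -> vec)
  (nms : nat -> vec -> R) (nm : vec -> R) (j : nat -> nat) : Prop :=
  (forall v, V v -> inRN N v) /\
  (* admissible sequence of V *)
  (forall s x, Vs s x -> V x) /\
  card_eq1 (Vs 0%nat) /\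
  (forall s, card_le (Vs s) (2 ^ (2 ^ s))) /\
  (forall s v, V v -> Vs s (pi s v)) /\
  (forall v, V v -> forall i,
     Un_cv (fun n => pi s0 v i +
              sumN s0 n (fun s => vsub (pi (S s) v) (pi s v) i)) (v i)) /\
  (forall s, (s0 <= s)%nat -> is_seminorm N (nms s)) /\
  is_seminorm N nm /\
  (forall s s', (s0 <= s)%nat -> (s <= s')%nat -> (j s <= j s')%nat) /\
  (forall s, (s0 <= s)%nat -> (1 <= j s)%nat /\ (j s <= S N)%nat) /\
  (forall s v, (s0 <= s)%nat -> V v ->
     let D := vsub (pi (S s) v) (pi s v) in
     let P := pi s v in
     sqrt (sumI 1 (j s - 1) (fun i => rearr N D i ^ 2)) <= nms s D /\
     rpow (sumI (j s) N (fun i => rpow (rearr N D i) (2 * p))) (1 / (2 * p))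
       <= nm D * rpow (INR N) (1 / (2 * p)) /\
     sqrt (sumI 1 (j s - 1) (fun i => rearr N P i ^ 2)) <= nms s P /\
     rpow (sumI (j s) N (fun i => rpow (rearr N P i) (2 * p))) (1 / (2 * p))
       <= nm P * rpow (INR N) (1 / (2 * p))).

(* Lambda(V) = sup of the (nondecreasing) partial sums below *)
Definition Lambda_set (V : vec -> Prop) (s0 : nat) (pi : nat -> vec -> vec)
  (nms : nat -> vec -> R) : R -> Prop :=
  fun x => exists v n, V v /\
    x = sumN s0 n (fun s => nms s (vsub (pi (S s) v) (pi s v)))
        + nms s0 (pi s0 v).

Definition Theta_set (V : vec -> Prop) (s0 : nat) (pi : nat -> vec -> vec)
  (nm : vec -> R) : R -> Prop :=
  fun x => exists v n, V v /\
    x = sumN s0 n (fun s => sqrt (2 ^ s) * nm (vsub (pi (S s) v) (pi s v)))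
        + sqrt (2 ^ s0) * nm (pi s0 v).

(* Rademacher vectors: eps in {true,false}^N, uniform; eps_i = +1 / -1 *)
Fixpoint all_signs (N : nat) : list (list bool) :=
  match N with
  | O => [[]]
  | S n => map (cons true) (all_signs n) ++ map (cons false) (all_signs n)
  end.
Definition sgn (e : list bool) (i : nat) : R := if nth i e true then 1 else -1.

Definition prob (N : nat) (E : list bool -> Prop) : R :=
  fold_right (fun e acc =>
    (if excluded_middle_informative (E e) then 1 else 0) + acc) 0 (all_signs N)
  / 2 ^ N.

(* Main.v *)
Require Import Defs.
From Stdlib Require Import Reals List.
From Stdlib Require Import Lra Lia Permutation Sorted ClassicalEpsilon.
From Coquelicot Require Import Coquelicot.
Open Scope R_scope.


Lemma exp_le_mono x y : x <= y -> exp x <= exp y.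
Proof. intros H. destruct (Rle_lt_or_eq_dec _ _ H). apply Rlt_le, exp_increasing; auto. subst; lra. Qed.

Lemma mono_le (f df : R -> R) (a b : R) : a <= b ->
  (forall x, a <= x <= b -> is_derive f x (df x)) ->
  (forall x, a <= x <= b -> 0 <= df x) -> f a <= f b.
Proof.
  intros Hab Hd Hp. destruct (Rle_lt_or_eq_dec _ _ Hab) as [Hlt|Heq].
  2:{ subst. lra. }
  destruct (MVT_cor3 f df a b Hlt) as [c [H1 [H2 H3]]].
  { intros x H1 H2. apply is_derive_Reals. apply Hd. lra. }
  rewrite H3. assert (0 <= df c) by (apply Hp; lra). nra.
Qed.

Lemma cosh_le (x : R) : (exp x + exp (- x)) / 2 <= exp (x ^ 2 / 2).
Proof.
  assert (Hs : forall y, 0 <= y -> (exp y + exp (- y)) / 2 <= exp (y ^ 2 / 2)).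
  { intros y Hy.
    assert (Hchi : forall w, 0 <= w -> 0 <= w * (exp w + exp (- w)) - (exp w - exp (- w))).
    { intros w Hw.
      assert (H := mono_le (fun w => w * (exp w + exp (- w)) - (exp w - exp (- w)))
                 (fun w => w * (exp w - exp (- w))) 0 w Hw).
      simpl in H. rewrite Ropp_0, exp_0 in H.
      assert (H0: 0 * (1+1) - (1-1) = 0) by ring. rewrite H0 in H. apply H.
      - intros w0 Hx. auto_derive; auto. ring.
      - intros w0 Hx. apply Rmult_le_pos; [lra|].
        assert (exp (-w0) <= exp w0) by (apply exp_le_mono; lra). lra. }
    assert (H := mono_le (fun w => - ((exp w + exp (- w)) * exp (- (w ^ 2 / 2))))
                 (fun w => (w * (exp w + exp (- w)) - (exp w - exp (- w))) * exp (- (w ^ 2 / 2))) 0 y Hy).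
    simpl in H.
    assert (E0 : - ((exp 0 + exp (- 0)) * exp (- (0 * (0 * 1) / 2))) = -2).
    { rewrite Ropp_0, exp_0. replace (- (0 * (0 * 1) / 2)) with 0 by field. rewrite exp_0. ring. }
    rewrite E0 in H.
    assert (H' : -2 <= - ((exp y + exp (- y)) * exp (- (y ^ 2 / 2)))).
    { simpl. apply H.
      - intros w0 Hx. auto_derive; auto. unfold Rdiv. set (E := exp (- (w0 * (w0 * 1) * / 2))). field.
      - intros w0 Hx. apply Rmult_le_pos; [apply Hchi; lra | apply Rlt_le, exp_pos]. }
    assert (Hm : exp (- (y ^ 2 / 2)) * exp (y ^ 2 / 2) = 1).
    { rewrite <- exp_plus. replace (- (y ^ 2 / 2) + y ^ 2 / 2) with 0 by ring. apply exp_0. }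
    assert (Hp : 0 < exp (y^2/2)) by apply exp_pos.
    assert ((exp y + exp (- y)) * exp (- (y ^ 2 / 2)) * exp (y^2/2) <= 2 * exp (y^2/2)).
    { apply Rmult_le_compat_r; lra. }
    rewrite Rmult_assoc, Hm in H0. lra. }
  destruct (Rle_or_lt 0 x).
  - now apply Hs.
  - assert (H1 := Hs (- x) ltac:(lra)). rewrite Ropp_involutive in H1.
    replace ((- x) ^ 2) with (x ^ 2) in H1 by ring. lra.
Qed.


Lemma exp_convex_aux (l x y : R) : 0 <= l <= 1 -> y <= x ->
  exp (l * x + (1 - l) * y) <= l * exp x + (1 - l) * exp y.
Proof.
  intros Hl Hxy.
  assert (H := mono_le (fun w => l * exp w + (1 - l) * exp y - exp (l * w + (1 - l) * y))
     (fun w => l * (exp w - exp (l * w + (1 - l) * y))) y x Hxy). simpl in H.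
  replace (l * y + (1 - l) * y) with y in H by ring.
  assert (0 <= l * exp x + (1 - l) * exp y - exp (l * x + (1 - l) * y)); [|lra].
  replace 0 with (l * exp y + (1 - l) * exp y - exp y) by ring. apply H.
  - intros w Hw. auto_derive; auto. ring.
  - intros w Hw. apply Rmult_le_pos; [lra|]. 
    assert (exp (l * w + (1 - l) * y) <= exp w); [|lra]. apply exp_le_mono. nra.
Qed.

Lemma exp_convex (l x y : R) : 0 <= l <= 1 ->
  exp (l * x + (1 - l) * y) <= l * exp x + (1 - l) * exp y.
Proof.
  intros Hl. destruct (Rle_or_lt y x). now apply exp_convex_aux.
  assert (H1 := exp_convex_aux (1 - l) y x ltac:(lra) ltac:(lra)).
  replace (1 - (1 - l)) with l in H1 by ring. rewrite Rplus_comm in H1. lra.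
Qed.

Lemma rpow_pos a b : 0 < a -> rpow a b = Rpower a b.
Proof. intros H. unfold rpow. destruct (Rlt_dec 0 a); [auto|lra]. Qed.
Lemma rpow_nonpos a b : a <= 0 -> rpow a b = 0.
Proof. intros H. unfold rpow. destruct (Rlt_dec 0 a); [lra|auto]. Qed.
Lemma rpow_ge0 a b : 0 <= rpow a b.
Proof. unfold rpow. destruct (Rlt_dec 0 a). unfold Rpower. apply Rlt_le, exp_pos. lra. Qed.
Lemma rpow_gt0 a b : 0 < a -> 0 < rpow a b.
Proof. intros H. rewrite rpow_pos by auto. apply exp_pos. Qed.
Lemma rpow_0 b : rpow 0 b = 0.
Proof. apply rpow_nonpos; lra. Qed.
Lemma rpow_eq0 a b : 0 <= a -> rpow a b = 0 -> a = 0.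
Proof. intros H H1. destruct (Rle_lt_or_eq_dec _ _ H); auto. 
  assert (H2 := rpow_gt0 a b r). lra. Qed.

Lemma young (a b p q : R) : 0 <= a -> 0 <= b -> 1 < p -> 1 < q -> 1 / p + 1 / q = 1 ->
  a * b <= rpow a p / p + rpow b q / q.
Proof.
  intros Ha Hb Hp Hq Hpq.
  assert (R0 : 0 <= rpow a p / p + rpow b q / q).
  { apply Rplus_le_le_0_compat; apply Rmult_le_pos; try apply rpow_ge0;
    apply Rlt_le, Rinv_0_lt_compat; lra. }
  destruct (Rle_lt_or_eq_dec _ _ Ha) as [Ha'|Ha']; [|subst; lra].
  destruct (Rle_lt_or_eq_dec _ _ Hb) as [Hb'|Hb']; [|subst; lra].
  rewrite !rpow_pos by auto. unfold Rpower.
  assert (Hl : 0 <= 1 / p <= 1).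
  { split. apply Rlt_le; unfold Rdiv; rewrite Rmult_1_l; apply Rinv_0_lt_compat; lra.
    assert (0 < 1/q) by (unfold Rdiv; rewrite Rmult_1_l; apply Rinv_0_lt_compat; lra). lra. }
  assert (H := exp_convex (1 / p) (p * ln a) (q * ln b) Hl).
  replace (1 / p * (p * ln a) + (1 - 1 / p) * (q * ln b)) with (ln a + ln b) in H.
  2:{ replace (1 - 1/p) with (1/q) by lra. field. lra. }
  rewrite exp_plus, !exp_ln in H by auto.
  replace (1 - 1/p) with (1/q) in H by lra. lra.
Qed.


Definition lsum {A : Type} (l : list A) (f : A -> R) : R :=
  fold_right (fun k acc => f k + acc) 0 l.

Lemma lsum_nil {A} (f : A -> R) : lsum nil f = 0.
Proof. reflexivity. Qed.
Lemma lsum_cons {A} a l (f : A -> R) : lsum (a :: l) f = f a + lsum l f.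
Proof. reflexivity. Qed.
Lemma lsum_app {A} l1 l2 (f : A -> R) : lsum (l1 ++ l2) f = lsum l1 f + lsum l2 f.
Proof. induction l1; simpl. ring. unfold lsum in *; simpl. rewrite IHl1. ring. Qed.
Lemma lsum_map {A B} (g : A -> B) l (f : B -> R) : lsum (map g l) f = lsum l (fun a => f (g a)).
Proof. induction l; simpl; auto. unfold lsum in *; simpl. rewrite IHl. auto. Qed.
Lemma lsum_le {A} l (f g : A -> R) : (forall a, In a l -> f a <= g a) -> lsum l f <= lsum l g.
Proof. induction l; intros H; simpl. lra. unfold lsum in *; simpl.
  apply Rplus_le_compat. apply H; simpl; auto. apply IHl. intros; apply H; simpl; auto. Qed.
Lemma lsum_ext {A} l (f g : A -> R) : (forall a, In a l -> f a = g a) -> lsum l f = lsum l g.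
Proof. intros H. apply Rle_antisym; apply lsum_le; intros a Ha; rewrite H; auto; lra. Qed.
Lemma lsum_plus {A} l (f g : A -> R) : lsum l (fun a => f a + g a) = lsum l f + lsum l g.
Proof. induction l; simpl. unfold lsum; simpl; ring. unfold lsum in *; simpl. rewrite IHl. ring. Qed.
Lemma lsum_scal {A} l c (f : A -> R) : lsum l (fun a => c * f a) = c * lsum l f.
Proof. induction l; simpl. unfold lsum; simpl; ring. unfold lsum in *; simpl. rewrite IHl. ring. Qed.
Lemma lsum_opp {A} l (f : A -> R) : lsum l (fun a => - f a) = - lsum l f.
Proof. induction l; simpl. unfold lsum; simpl; ring. unfold lsum in *; simpl. rewrite IHl. ring. Qed.
Lemma lsum_const0 {A} l : lsum l (fun _ : A => 0) = 0.
Proof. induction l; simpl. auto. unfold lsum in *; simpl. rewrite IHl. ring. Qed.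
Lemma lsum_nonneg {A} l (f : A -> R) : (forall a, In a l -> 0 <= f a) -> 0 <= lsum l f.
Proof. intros H. rewrite <- (lsum_const0 l). now apply lsum_le. Qed.
Lemma lsum_abs {A} l (f : A -> R) : Rabs (lsum l f) <= lsum l (fun a => Rabs (f a)).
Proof. induction l; simpl. unfold lsum; simpl. rewrite Rabs_R0; lra.
  unfold lsum in *; simpl. eapply Rle_trans. apply Rabs_triang. lra. Qed.
Lemma lsum_perm {A} l1 l2 (f : A -> R) : Permutation l1 l2 -> lsum l1 f = lsum l2 f.
Proof. intros H; induction H; unfold lsum in *; simpl; try lra. Qed.
Lemma lsum_eq0 {A} l (f : A -> R) : (forall a, In a l -> 0 <= f a) -> lsum l f = 0 ->
  forall a, In a l -> f a = 0.
Proof. induction l; intros H H0 b Hb; simpl in *. contradiction.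
  unfold lsum in *; simpl in *.
  assert (0 <= f a) by auto.
  assert (0 <= fold_right (fun k acc => f k + acc) 0 l) by (apply (lsum_nonneg l f); auto).
  destruct Hb. subst; lra. apply IHl; auto. lra. Qed.

Lemma div_nonneg a b : 0 <= a -> 0 < b -> 0 <= a / b.
Proof. intros. unfold Rdiv. apply Rmult_le_pos; auto. apply Rlt_le, Rinv_0_lt_compat; auto. Qed.

Lemma rpow_div x a p : 0 <= x -> 0 < a -> rpow (x / a) p = rpow x p / rpow a p.
Proof. intros Hx Ha. destruct (Rle_lt_or_eq_dec _ _ Hx).
  - rewrite !rpow_pos; auto. unfold Rpower. unfold Rdiv. rewrite ln_mult, ln_Rinv by (auto; apply Rinv_0_lt_compat; auto).
    replace (p * (ln x + - ln a)) with (p * ln x + - (p * ln a)) by ring.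
    rewrite exp_plus, exp_Ropp. auto. apply Rmult_lt_0_compat; auto; apply Rinv_0_lt_compat; auto.
  - subst. unfold Rdiv. rewrite Rmult_0_l, !rpow_0. ring. Qed.

Lemma rpow_inv_pow X p : 0 < X -> p <> 0 -> rpow (rpow X (1 / p)) p = X.
Proof. intros H Hp. rewrite (rpow_pos X) by auto. rewrite rpow_pos by (apply exp_pos).
  rewrite Rpower_mult. replace (1 / p * p) with 1 by (field; auto). apply Rpower_1; auto. Qed.

Lemma holder {A} (l : list A) (x y : A -> R) (p q : R) :
  (forall a, 0 <= x a) -> (forall a, 0 <= y a) -> 1 < p -> 1 < q -> 1 / p + 1 / q = 1 ->
  lsum l (fun a => x a * y a) <=
  rpow (lsum l (fun a => rpow (x a) p)) (1 / p) * rpow (lsum l (fun a => rpow (y a) q)) (1 / q).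
Proof.
  intros Hx Hy Hp Hq Hpq.
  set (X := lsum l (fun a => rpow (x a) p)). set (Y := lsum l (fun a => rpow (y a) q)).
  assert (HX : 0 <= X) by (apply lsum_nonneg; intros; apply rpow_ge0).
  assert (HY : 0 <= Y) by (apply lsum_nonneg; intros; apply rpow_ge0).
  assert (R0 : 0 <= rpow X (1/p) * rpow Y (1/q)) by (apply Rmult_le_pos; apply rpow_ge0).
  destruct (Rle_lt_or_eq_dec _ _ HX) as [HX'|HX'].
  2:{ assert (E : lsum l (fun a => x a * y a) = 0); [|lra].
      rewrite <- (lsum_const0 l). apply lsum_ext. intros a Ha.
      assert (rpow (x a) p = 0). { apply (lsum_eq0 l (fun a => rpow (x a) p)); auto.
        intros; apply rpow_ge0. }
      apply rpow_eq0 in H; auto. rewrite H; ring. }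
  destruct (Rle_lt_or_eq_dec _ _ HY) as [HY'|HY'].
  2:{ assert (E : lsum l (fun a => x a * y a) = 0); [|lra].
      rewrite <- (lsum_const0 l). apply lsum_ext. intros a Ha.
      assert (rpow (y a) q = 0). { apply (lsum_eq0 l (fun a => rpow (y a) q)); auto.
        intros; apply rpow_ge0. }
      apply rpow_eq0 in H; auto. rewrite H; ring. }
  set (al := rpow X (1/p)). set (be := rpow Y (1/q)).
  assert (Hal : 0 < al) by (apply rpow_gt0; auto).
  assert (Hbe : 0 < be) by (apply rpow_gt0; auto).
  assert (Hal2 : rpow al p = X) by (apply rpow_inv_pow; auto; lra).
  assert (Hbe2 : rpow be q = Y) by (apply rpow_inv_pow; auto; lra).
  apply Rle_trans with (lsum l (fun a => al * be * (rpow (x a) p / X / p + rpow (y a) q / Y / q))).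
  - apply lsum_le. intros a _.
    assert (H := young (x a / al) (y a / be) p q ltac:(apply div_nonneg; auto)
       ltac:(apply div_nonneg; auto) Hp Hq Hpq).
    rewrite !rpow_div, Hal2, Hbe2 in H by auto.
    replace (x a * y a) with (al * be * (x a / al * (y a / be))) by (field; lra).
    apply Rmult_le_compat_l. nra. lra.
  - rewrite lsum_scal, lsum_plus.
    unfold Rdiv. rewrite !(lsum_ext l (fun a => rpow (x a) p * / X * / p) (fun a => (/X * /p) * rpow (x a) p))
      by (intros; ring).
    rewrite !(lsum_ext l (fun a => rpow (y a) q * / Y * / q) (fun a => (/Y * /q) * rpow (y a) q))
      by (intros; ring).
    rewrite !lsum_scal. fold X Y.
    replace (/ X * / p * X + / Y * / q * Y) with (1/p + 1/q) by (field; lra).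
    rewrite Hpq. lra.
Qed.


Definition indE {A : Type} (E : A -> Prop) (e : A) : R :=
  if excluded_middle_informative (E e) then 1 else 0.

Lemma prob_eq N E : prob N E = lsum (all_signs N) (indE E) / 2 ^ N.
Proof. reflexivity. Qed.

Lemma indE_ge0 {A} (E : A -> Prop) e : 0 <= indE E e.
Proof. unfold indE. destruct excluded_middle_informative; lra. Qed.
Lemma indE_le1 {A} (E : A -> Prop) e : indE E e <= 1.
Proof. unfold indE. destruct excluded_middle_informative; lra. Qed.
Lemma indE_true {A} (E : A -> Prop) e : E e -> indE E e = 1.
Proof. unfold indE. destruct excluded_middle_informative; tauto. Qed.
Lemma indE_false {A} (E : A -> Prop) e : ~ E e -> indE E e = 0.
Proof. unfold indE. destruct excluded_middle_informative; tauto. Qed.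
Lemma indE_mono {A} (E1 E2 : A -> Prop) e : (E1 e -> E2 e) -> indE E1 e <= indE E2 e.
Proof. unfold indE. do 2 destruct excluded_middle_informative; try lra. tauto. Qed.
Lemma indE_or {A} (E1 E2 : A -> Prop) e : indE (fun e => E1 e \/ E2 e) e <= indE E1 e + indE E2 e.
Proof. unfold indE. repeat destruct excluded_middle_informative; try lra. tauto. Qed.
Lemma indE_compl {A} (E : A -> Prop) e : indE E e + indE (fun e => ~ E e) e = 1.
Proof. unfold indE. repeat destruct excluded_middle_informative; try lra; tauto. Qed.

Lemma pow2_pos N : 0 < 2 ^ N.
Proof. apply pow_lt; lra. Qed.

Lemma lsum_all_signs_1 N : lsum (all_signs N) (fun _ => 1) = 2 ^ N.
Proof. induction N; simpl. unfold lsum; simpl; ring.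
  rewrite lsum_app, !lsum_map, IHN. ring. Qed.

Lemma prob_mono N (E1 E2 : list bool -> Prop) :
  (forall e, In e (all_signs N) -> E1 e -> E2 e) -> prob N E1 <= prob N E2.
Proof. intros H. rewrite !prob_eq. unfold Rdiv. apply Rmult_le_compat_r.
  apply Rlt_le, Rinv_0_lt_compat, pow2_pos.
  apply lsum_le. intros; apply indE_mono; auto. Qed.

Lemma prob_or N (E1 E2 : list bool -> Prop) :
  prob N (fun e => E1 e \/ E2 e) <= prob N E1 + prob N E2.
Proof. rewrite !prob_eq. unfold Rdiv. rewrite <- Rmult_plus_distr_r.
  apply Rmult_le_compat_r. apply Rlt_le, Rinv_0_lt_compat, pow2_pos.
  rewrite <- lsum_plus. apply lsum_le. intros; apply indE_or. Qed.

Lemma prob_compl N (E : list bool -> Prop) : prob N E + prob N (fun e => ~ E e) = 1.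
Proof. rewrite !prob_eq. unfold Rdiv. rewrite <- Rmult_plus_distr_r, <- lsum_plus.
  rewrite (lsum_ext _ _ (fun _ => 1)) by (intros; apply indE_compl).
  rewrite lsum_all_signs_1. field. apply Rgt_not_eq, pow2_pos. Qed.

Lemma prob_false N (E : list bool -> Prop) : (forall e, ~ E e) -> prob N E = 0.
Proof. intros H. rewrite prob_eq. rewrite (lsum_ext _ _ (fun _ => 0)).
  rewrite lsum_const0. unfold Rdiv; ring. intros; apply indE_false; auto. Qed.

Lemma prob_ge0 N E : 0 <= prob N E.
Proof. rewrite prob_eq. apply div_nonneg. apply lsum_nonneg; intros; apply indE_ge0. apply pow2_pos. Qed.

Lemma sumN_lsum m n f : sumN m n f = lsum (seq m n) f.
Proof. reflexivity. Qed.

Lemma sumN_S0 n f : sumN 0 (S n) f = f 0%nat + sumN 0 n (fun i => f (S i)).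
Proof. rewrite !sumN_lsum. change (seq 0 (S n)) with (0%nat :: seq 1 n). rewrite lsum_cons. rewrite <- seq_shift, lsum_map. auto. Qed.

Lemma mgf N (a : nat -> R) (th : R) :
  lsum (all_signs N) (fun e => exp (th * sumN 0 N (fun i => sgn e i * a i)))
  <= 2 ^ N * exp (th ^ 2 / 2 * sumN 0 N (fun i => a i ^ 2)).
Proof.
  revert a. induction N; intros a.
  - simpl. unfold lsum, sumN; simpl. rewrite !Rmult_0_r, exp_0. lra.
  - simpl all_signs. rewrite lsum_app, !lsum_map.
    rewrite (lsum_ext (all_signs N) (fun e => exp (th * sumN 0 (S N) (fun i => sgn (true :: e) i * a i)))
      (fun e => exp (th * a 0%nat) * exp (th * sumN 0 N (fun i => sgn e i * a (S i))))).
    2:{ intros e _. rewrite sumN_S0. rewrite <- exp_plus. f_equal. unfold sgn; simpl. ring. }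
    rewrite (lsum_ext (all_signs N) (fun e => exp (th * sumN 0 (S N) (fun i => sgn (false :: e) i * a i)))
      (fun e => exp (- (th * a 0%nat)) * exp (th * sumN 0 N (fun i => sgn e i * a (S i))))).
    2:{ intros e _. rewrite sumN_S0. rewrite <- exp_plus. f_equal. unfold sgn; simpl. ring. }
    rewrite !lsum_scal, <- Rmult_plus_distr_r.
    specialize (IHN (fun i => a (S i))).
    assert (Hc := cosh_le (th * a 0%nat)).
    assert (0 <= lsum (all_signs N) (fun e => exp (th * sumN 0 N (fun i => sgn e i * a (S i))))).
    { apply lsum_nonneg; intros; apply Rlt_le, exp_pos. }
    apply Rle_trans with (2 * exp ((th * a 0%nat) ^ 2 / 2) * (2 ^ N * exp (th ^ 2 / 2 * sumN 0 N (fun i => a (S i) ^ 2)))).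
    + apply Rmult_le_compat; try lra. apply Rplus_le_le_0_compat; apply Rlt_le, exp_pos.
    + rewrite sumN_S0. rewrite Rmult_plus_distr_l, exp_plus.
      replace ((th * a 0%nat) ^ 2 / 2) with (th ^ 2 / 2 * a 0%nat ^ 2) by field. simpl. lra.
Qed.


Definition Xs (e : list bool) N (a : nat -> R) := sumN 0 N (fun i => sgn e i * a i).

Lemma hoeff1 N a lam : 0 <= lam -> 0 < sumN 0 N (fun i => a i ^ 2) ->
  lsum (all_signs N) (indE (fun e => lam < Xs e N a)) <=
  2 ^ N * exp (- (lam ^ 2 / (2 * sumN 0 N (fun i => a i ^ 2)))).
Proof.
  intros Hl Hs. set (s2 := sumN 0 N (fun i => a i ^ 2)) in *.
  set (th := lam / s2).
  assert (Hth : 0 <= th) by (apply div_nonneg; auto).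
  apply Rle_trans with (lsum (all_signs N) (fun e => exp (- (th * lam)) * exp (th * Xs e N a))).
  - apply lsum_le. intros e _. rewrite <- exp_plus. unfold indE.
    destruct excluded_middle_informative.
    + rewrite <- exp_0 at 1. apply exp_le_mono. nra.
    + apply Rlt_le, exp_pos.
  - rewrite lsum_scal. unfold Xs.
    eapply Rle_trans. apply Rmult_le_compat_l. apply Rlt_le, exp_pos. apply mgf.
    fold s2. rewrite Rmult_comm, Rmult_assoc, <- exp_plus. apply Rmult_le_compat_l.
    apply Rlt_le, pow2_pos. apply exp_le_mono. unfold th. right. field. lra.
Qed.

Lemma Xs_opp e N a : Xs e N (fun i => - a i) = - Xs e N a.
Proof. unfold Xs. rewrite !sumN_lsum, <- lsum_opp. apply lsum_ext. intros; ring. Qed.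

Lemma hoeffding N a tau K : 0 <= tau -> sqrt (sumN 0 N (fun i => a i ^ 2)) <= K ->
  prob N (fun e => tau * K < Rabs (Xs e N a)) <= 2 * exp (- (tau ^ 2 / 2)).
Proof.
  intros Ht HK. set (s2 := sumN 0 N (fun i => a i ^ 2)) in *.
  assert (Hs2 : 0 <= s2). { unfold s2. rewrite sumN_lsum. apply lsum_nonneg. intros; apply pow2_ge_0. }
  assert (HE : 0 < exp (- (tau ^ 2 / 2))) by apply exp_pos.
  destruct (Rle_lt_or_eq_dec _ _ Hs2) as [Hp|H0].
  - apply Rle_trans with (prob N (fun e => tau * sqrt s2 < Xs e N a \/ tau * sqrt s2 < Xs e N (fun i => - a i))).
    + apply prob_mono. intros e _ H. rewrite Xs_opp.
      assert (tau * sqrt s2 <= tau * K) by (apply Rmult_le_compat_l; auto).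
      unfold Rabs in H. destruct Rcase_abs; [right|left]; lra.
    + eapply Rle_trans. apply prob_or.
      assert (Hb : forall b, sumN 0 N (fun i => b i ^ 2) = s2 ->
                prob N (fun e => tau * sqrt s2 < Xs e N b) <= exp (- (tau ^ 2 / 2))).
      { intros b Hb. rewrite prob_eq. unfold Rdiv.
        apply Rle_trans with (2 ^ N * exp (- ((tau * sqrt s2) ^ 2 / (2 * s2))) * / 2 ^ N).
        apply Rmult_le_compat_r. apply Rlt_le, Rinv_0_lt_compat, pow2_pos.
        rewrite <- Hb at 2. apply hoeff1. apply Rmult_le_pos; auto. apply sqrt_pos. rewrite Hb; auto.
        rewrite Rpow_mult_distr. simpl (sqrt s2 ^ 2). rewrite Rmult_1_r, sqrt_sqrt by lra.
        replace (tau ^ 2 * s2 / (2 * s2)) with (tau ^ 2 / 2) by (field; lra).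
        right. unfold Rdiv. field. apply Rgt_not_eq, pow2_pos. }
      assert (H1 := Hb a eq_refl). assert (H2 := Hb (fun i => - a i)).
      assert (E : sumN 0 N (fun i => (- a i) ^ 2) = s2).
      { unfold s2. rewrite !sumN_lsum. apply lsum_ext; intros; ring. }
      specialize (H2 E). lra.
  - rewrite prob_false. lra. intros e He.
    assert (Ea : forall i, In i (seq 0 N) -> a i = 0).
    { intros i Hi. assert (a i ^ 2 = 0). apply (lsum_eq0 (seq 0 N) (fun i => a i ^ 2)); auto.
      intros; apply pow2_ge_0. idtac. 
      nra. }
    assert (Xs e N a = 0). { unfold Xs. rewrite sumN_lsum, <- (lsum_const0 (seq 0 N)).
      apply lsum_ext. intros i Hi. rewrite Ea; auto; ring. }
    rewrite H, Rabs_R0 in He. rewrite <- H0, sqrt_0 in HK.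
    assert (0 <= tau * K) by (apply Rmult_le_pos; lra). lra.
Qed.


Lemma insert_perm a l : Permutation (a :: l) (insert_desc a l).
Proof. induction l; simpl. auto. destruct Rle_dec. auto.
  eapply perm_trans. apply perm_swap. auto. Qed.

Lemma sort_perm l : Permutation l (sort_desc l).
Proof. induction l; simpl. auto. eapply perm_trans. apply perm_skip, IHl. apply insert_perm. Qed.

Lemma insert_sorted a l : StronglySorted Rge l -> StronglySorted Rge (insert_desc a l).
Proof. induction l; intros H; simpl. repeat constructor.
  apply StronglySorted_inv in H as [H1 H2]. destruct Rle_dec.
  - constructor. constructor; auto. constructor. lra.
    eapply Forall_impl; [|exact H2]. intros; lra.
  - constructor. auto. apply Forall_forall. intros x Hx.
    apply (Permutation_in _ (Permutation_sym (insert_perm a l))) in Hx.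
    destruct Hx. subst; lra. rewrite Forall_forall in H2. auto. Qed.

Lemma sort_sorted l : StronglySorted Rge (sort_desc l).
Proof. induction l; simpl. constructor. now apply insert_sorted. Qed.

Lemma ss_app {A} (Rl : A -> A -> Prop) l1 l2 : StronglySorted Rl (l1 ++ l2) ->
  forall x y, In x l1 -> In y l2 -> Rl x y.
Proof. induction l1; simpl; intros H x y Hx Hy. contradiction.
  apply StronglySorted_inv in H as [H1 H2]. destruct Hx. subst.
  rewrite Forall_forall in H2. apply H2, in_or_app; auto. eauto. Qed.

Lemma rearr_idx N (x : vec) : exists idx, Permutation (seq 0 N) idx /\
  sort_desc (map (fun i => Rabs (x i)) (seq 0 N)) = map (fun i => Rabs (x i)) idx.
Proof.
  destruct (Permutation_map_inv _ _ (Permutation_sym (sort_perm (map (fun i => Rabs (x i)) (seq 0 N)))))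
    as [l3 [H1 H2]]. exists l3. split; auto.
Qed.

Lemma skipn_nth {A} (S : list A) a d : (a < length S)%nat -> skipn a S = nth a S d :: skipn (Datatypes.S a) S.
Proof. revert a. induction S; intros b H; simpl in *. lia. destruct b. auto.
  simpl. apply IHS. lia. Qed.

Lemma lsum_seq_nth (S : list R) G : forall n a, (a + n <= length S)%nat ->
  lsum (seq a n) (fun k => G (nth k S 0)) = lsum (firstn n (skipn a S)) G.
Proof. induction n; intros a H. simpl. auto.
  change (seq a (Datatypes.S n)) with (a :: seq (Datatypes.S a) n).
  rewrite (skipn_nth S a 0) by lia. simpl firstn. rewrite !lsum_cons. rewrite IHn by lia. auto. Qed.

Lemma sumI_head N (x : vec) idx G m : Permutation (seq 0 N) idx ->
  sort_desc (map (fun i => Rabs (x i)) (seq 0 N)) = map (fun i => Rabs (x i)) idx ->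
  (m <= N)%nat ->
  sumI 1 m (fun k => G (rearr N x k)) = lsum (firstn m idx) (fun i => G (Rabs (x i))).
Proof.
  intros Hp Hs Hm. unfold sumI, rearr. rewrite Hs.
  change (fold_right (fun k acc => G (nth (k - 1) (map (fun i => Rabs (x i)) idx) 0) + acc) 0 (seq 1 (S m - 1)))
    with (lsum (seq 1 (S m - 1)) (fun k => G (nth (k - 1) (map (fun i => Rabs (x i)) idx) 0))).
  replace (S m - 1)%nat with m by lia. rewrite <- seq_shift, lsum_map.
  rewrite (lsum_ext _ _ (fun k => G (nth k (map (fun i => Rabs (x i)) idx) 0))).
  2:{ intros. f_equal. f_equal. lia. }
  rewrite lsum_seq_nth. simpl skipn. rewrite firstn_map, lsum_map. auto.
  rewrite length_map, <- (Permutation_length Hp), length_seq. lia.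
Qed.

Lemma sumI_tail N (x : vec) idx G m : Permutation (seq 0 N) idx ->
  sort_desc (map (fun i => Rabs (x i)) (seq 0 N)) = map (fun i => Rabs (x i)) idx ->
  (m <= N)%nat ->
  sumI (S m) N (fun k => G (rearr N x k)) = lsum (skipn m idx) (fun i => G (Rabs (x i))).
Proof.
  intros Hp Hs Hm. unfold sumI, rearr. rewrite Hs.
  change (fold_right (fun k acc => G (nth (k - 1) (map (fun i => Rabs (x i)) idx) 0) + acc) 0 (seq (S m) (S N - S m)))
    with (lsum (seq (S m) (S N - S m)) (fun k => G (nth (k - 1) (map (fun i => Rabs (x i)) idx) 0))).
  replace (S N - S m)%nat with (N - m)%nat by lia. rewrite <- seq_shift, lsum_map.
  rewrite (lsum_ext _ _ (fun k => G (nth k (map (fun i => Rabs (x i)) idx) 0))).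
  2:{ intros. f_equal. f_equal. lia. }
  assert (HL : length idx = N) by (rewrite <- (Permutation_length Hp), length_seq; auto).
  rewrite lsum_seq_nth. rewrite firstn_all2. rewrite skipn_map, lsum_map. auto.
  rewrite length_skipn, length_map. lia.
  rewrite length_map. lia.
Qed.

Lemma head_tail_sorted N (x : vec) idx m : 
  sort_desc (map (fun i => Rabs (x i)) (seq 0 N)) = map (fun i => Rabs (x i)) idx ->
  forall h i, In h (firstn m idx) -> In i (skipn m idx) -> Rabs (x i) <= Rabs (x h).
Proof.
  intros Hs h i Hh Hi. assert (H := sort_sorted (map (fun i => Rabs (x i)) (seq 0 N))).
  rewrite Hs, <- (firstn_skipn m idx), map_app in H.
  assert (Rabs (x h) >= Rabs (x i)); [|lra].
  eapply (ss_app _ _ _ H); apply (in_map (fun i => Rabs (x i))); auto.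
Qed.

Lemma nodup_app_disj {A} (l1 l2 : list A) a : NoDup (l1 ++ l2) -> In a l2 -> ~ In a l1.
Proof. induction l1; simpl; intros H Ha Hb. auto. inversion H; subst.
  destruct Hb. subst. apply H2. apply in_or_app; auto. eapply IHl1; eauto. Qed.

Lemma lsum_ind_perm N idx l1 l2 (g : nat -> R) : Permutation (seq 0 N) idx -> idx = l1 ++ l2 ->
  lsum (seq 0 N) (fun i => indE (fun i => In i l1) i * g i) = lsum l1 g.
Proof.
  intros Hp He. rewrite (lsum_perm _ _ _ Hp), He, lsum_app.
  assert (ND : NoDup (l1 ++ l2)) by (rewrite <- He; eapply Permutation_NoDup; [exact Hp|apply seq_NoDup]).
  rewrite (lsum_ext l1 _ g). rewrite (lsum_ext l2 _ (fun _ => 0)). rewrite lsum_const0. ring.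
  - intros a Ha. rewrite indE_false. ring. intros Ha'.
    eapply nodup_app_disj; eauto.
  - intros a Ha. rewrite indE_true; auto. ring.
Qed.


Lemma rpow_le_base x y c : 0 <= x -> x <= y -> 0 <= c -> rpow x c <= rpow y c.
Proof. intros Hx Hxy Hc. destruct (Rle_lt_or_eq_dec _ _ Hx).
  - rewrite !rpow_pos by lra. apply Rle_Rpower_l; auto.
  - subst. rewrite rpow_0. apply rpow_ge0. Qed.

Lemma rpow_sq x p : rpow (x ^ 2) p = rpow (Rabs x) (2 * p).
Proof. destruct (Req_dec x 0). subst. rewrite Rabs_R0. replace (0^2) with 0 by ring. now rewrite !rpow_0.
  assert (0 < Rabs x) by (apply Rabs_pos_lt; auto).
  assert (E : x ^ 2 = Rpower (Rabs x) 2).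
  { replace 2 with (INR 2) by (simpl; ring). rewrite Rpower_pow by auto. now rewrite pow2_abs. }
  rewrite E, !rpow_pos. rewrite Rpower_mult. auto. auto. unfold Rpower; apply exp_pos. Qed.

Lemma rpow_2 x : 0 <= x -> rpow x 2 = x ^ 2.
Proof. intros H. destruct (Rle_lt_or_eq_dec _ _ H). rewrite rpow_pos by auto.
  replace 2 with (INR 2) by (simpl; ring). rewrite Rpower_pow; auto. subst. rewrite rpow_0. ring. Qed.

Lemma rpow_half x : 0 <= x -> rpow x (1/2) = sqrt x.
Proof. intros H. destruct (Rle_lt_or_eq_dec _ _ H). rewrite rpow_pos by auto.
  replace (1/2) with (/2) by field. apply Rpower_sqrt; auto. subst. rewrite rpow_0, sqrt_0; auto. Qed.

Lemma rpow_sq2 X p : 0 <= X -> p <> 0 -> (rpow X (1 / (2 * p))) ^ 2 = rpow X (1 / p).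
Proof. intros H Hp. destruct (Rle_lt_or_eq_dec _ _ H). rewrite !rpow_pos by auto.
  simpl. rewrite Rmult_1_r. unfold Rpower. rewrite <- exp_plus. f_equal. field. auto.
  subst. rewrite !rpow_0. ring. Qed.

Lemma cauchy_schwarz {A} (l : list A) (x y : A -> R) :
  (forall a, 0 <= x a) -> (forall a, 0 <= y a) ->
  lsum l (fun a => x a * y a) <= sqrt (lsum l (fun a => x a ^ 2)) * sqrt (lsum l (fun a => y a ^ 2)).
Proof. intros Hx Hy. eapply Rle_trans. apply (holder l x y 2 2); auto; lra.
  rewrite !(lsum_ext l (fun a => rpow _ 2) (fun a => _ ^ 2)) by (intros; apply rpow_2; auto).
  rewrite !rpow_half; try lra; apply lsum_nonneg; intros; apply pow2_ge_0. Qed.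

Lemma lsum_inj_le (T : nat -> Prop) (g : nat -> R) : (forall a, 0 <= g a) ->
  forall A B, (length A <= length B)%nat ->
  (forall a b, In a A -> T a -> In b B -> g a <= g b) ->
  lsum A (fun a => indE T a * g a) <= lsum B g.
Proof. intros Hg A. induction A as [|a A IH]; intros B HL H.
  - rewrite lsum_nil. apply lsum_nonneg; auto.
  - destruct B as [|b B]. simpl in HL; lia. rewrite !lsum_cons. apply Rplus_le_compat.
    + unfold indE. destruct excluded_middle_informative. rewrite Rmult_1_l. apply H; simpl; auto.
      rewrite Rmult_0_l; auto.
    + apply IH. simpl in HL; lia. intros; apply H; simpl; auto.
Qed.

Lemma lsum_ind_perm2 N l1 l2 (g : nat -> R) : Permutation (seq 0 N) (l1 ++ l2) ->
  lsum (seq 0 N) (fun i => indE (fun i => In i l1) i * g i) = lsum l1 g.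
Proof. intros Hp. eapply lsum_ind_perm; eauto. Qed.

Lemma indE_sq {A} (E : A -> Prop) e : indE E e * indE E e = indE E e.
Proof. unfold indE. destruct excluded_middle_informative; ring. Qed.

Lemma pervec N r r' (z u : vec) m A B tau :
  1 < r -> 1 < r' -> 1 / r + 1 / r' = 1 -> (m <= N)%nat -> 0 <= tau ->
  sqrt (sumI 1 m (fun i => rearr N u i ^ 2)) <= A ->
  rpow (sumI (S m) N (fun i => rpow (rearr N u i) (2 * r'))) (1 / (2 * r')) <= B ->
  prob N (fun e => 2 * l2norm N z * A +
      tau * (B * rpow (sumI (S m) N (fun i => rpow (rearr N z i) (2 * r))) (1 / (2 * r)))
      < Rabs (sumN 0 N (fun i => sgn e i * z i * u i))) <= 2 * exp (- (tau ^ 2 / 2)).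
Proof.
  intros Hr Hr' Hrr Hm Ht HA HB.
  destruct (rearr_idx N z) as [iz [Pz Sz]]. destruct (rearr_idx N u) as [iu [Pu Su]].
  assert (Lz : length iz = N) by (rewrite <- (Permutation_length Pz), length_seq; auto).
  assert (Lu : length iu = N) by (rewrite <- (Permutation_length Pu), length_seq; auto).
  set (Hz := firstn m iz). set (Tz := skipn m iz). set (Hu := firstn m iu). set (Tu := skipn m iu).
  assert (Pz' : Permutation (seq 0 N) (Hz ++ Tz)) by (unfold Hz, Tz; rewrite firstn_skipn; auto).
  assert (Pu' : Permutation (seq 0 N) (Hu ++ Tu)) by (unfold Hu, Tu; rewrite firstn_skipn; auto).
  assert (Pz'' : Permutation (seq 0 N) (Tz ++ Hz)) by (eapply perm_trans; [exact Pz'|apply Permutation_app_comm]).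
  assert (Pu'' : Permutation (seq 0 N) (Tu ++ Hu)) by (eapply perm_trans; [exact Pu'|apply Permutation_app_comm]).
  set (H := fun i => In i Hz \/ In i Hu).
  set (a := fun i => (1 - indE H i) * z i * u i).
  set (Zt := rpow (sumI (S m) N (fun i => rpow (rearr N z i) (2 * r))) (1 / (2 * r))).
  assert (HZt : 0 <= Zt) by apply rpow_ge0.
  assert (HB0 : 0 <= B) by (eapply Rle_trans; [apply rpow_ge0|exact HB]).
  assert (Ssq : lsum Hu (fun i => u i ^ 2) = sumI 1 m (fun i => rearr N u i ^ 2)).
  { rewrite (sumI_head N u iu (fun t => t ^ 2) m Pu Su Hm). apply lsum_ext; intros. now rewrite pow2_abs. }
  assert (HuA : sqrt (lsum Hu (fun i => u i ^ 2)) <= A) by (rewrite Ssq; auto).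
  assert (HzuA : sqrt (lsum Hz (fun i => indE (fun i => In i Tu) i * u i ^ 2)) <= A).
  { eapply Rle_trans; [|exact HuA]. apply sqrt_le_1_alt. apply lsum_inj_le.
    intros; apply pow2_ge_0. unfold Hz, Hu. rewrite !length_firstn, Lz, Lu. lia.
    intros x y Hx Hxt Hy. rewrite <- (pow2_abs (u x)), <- (pow2_abs (u y)). apply pow_incr. split. apply Rabs_pos.
    apply (head_tail_sorted N u iu m Su y x Hy Hxt). }
  assert (Det : forall e, Rabs (sumN 0 N (fun i => sgn e i * z i * u i)) <=
                2 * l2norm N z * A + Rabs (Xs e N a)).
  { intros e.
    assert (E : sumN 0 N (fun i => sgn e i * z i * u i) =
       lsum (seq 0 N) (fun i => sgn e i * (indE H i * z i * u i)) + Xs e N a).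
    { unfold Xs. rewrite !sumN_lsum, <- lsum_plus. apply lsum_ext. intros. unfold a. ring. }
    rewrite E. eapply Rle_trans. apply Rabs_triang. apply Rplus_le_compat_r.
    eapply Rle_trans. apply lsum_abs.
    apply Rle_trans with (lsum (seq 0 N) (fun i => Rabs (z i) * (indE (fun i => In i Hu) i * Rabs (u i)))
       + lsum (seq 0 N) (fun i => Rabs (z i) * (indE (fun i => In i Hz) i * indE (fun i => In i Tu) i * Rabs (u i)))).
    { rewrite <- lsum_plus. apply lsum_le. intros i Hi.
      rewrite !Rabs_mult. 
      assert (Es : Rabs (sgn e i) = 1) by (unfold sgn; destruct nth; unfold Rabs; destruct Rcase_abs; lra).
      assert (Ei : Rabs (indE H i) = indE H i) by (apply Rabs_pos_eq, indE_ge0).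
      rewrite Es, Ei.
      assert (Hi' : indE H i <= indE (fun i => In i Hu) i + indE (fun i => In i Hz) i * indE (fun i => In i Tu) i).
      { unfold indE at 1. destruct excluded_middle_informative as [Hh|Hh]; 
          [|apply Rplus_le_le_0_compat; [apply indE_ge0|apply Rmult_le_pos; apply indE_ge0]].
        destruct (classic (In i Hu)) as [Hiu|Hiu].
        - rewrite (indE_true (fun i => In i Hu) i Hiu). assert (0 <= indE (fun i => In i Hz) i * indE (fun i => In i Tu) i)
            by (apply Rmult_le_pos; apply indE_ge0). lra.
        - destruct Hh as [Hiz|Hiu']; [|contradiction].
          assert (In i Tu). { apply (Permutation_in _ Pu') in Hi. apply in_app_or in Hi. tauto. }
          rewrite (indE_true (fun i => In i Hz)), (indE_true (fun i => In i Tu)) by auto. 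
          assert (0 <= indE (fun i => In i Hu) i) by apply indE_ge0. lra. }
      assert (0 <= Rabs (z i) * Rabs (u i)) by (apply Rmult_le_pos; apply Rabs_pos).
      apply Rle_trans with ((indE (fun i => In i Hu) i + indE (fun i => In i Hz) i * indE (fun i => In i Tu) i) * (Rabs (z i) * Rabs (u i))).
      2:{ right; ring. }
      apply Rle_trans with (indE H i * (Rabs (z i) * Rabs (u i))). right; ring.
      apply Rmult_le_compat_r; auto. }
    assert (Hzn : sqrt (lsum (seq 0 N) (fun i => Rabs (z i) ^ 2)) = l2norm N z).
    { unfold l2norm. f_equal. rewrite sumN_lsum. apply lsum_ext; intros; apply pow2_abs. }
    assert (Hl2 : 0 <= l2norm N z) by apply sqrt_pos.
    assert (C1 : lsum (seq 0 N) (fun i => Rabs (z i) * (indE (fun i => In i Hu) i * Rabs (u i))) <= l2norm N z * A).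
    { eapply Rle_trans. apply cauchy_schwarz. intros; apply Rabs_pos.
      intros; apply Rmult_le_pos; [apply indE_ge0|apply Rabs_pos].
      cbv beta. rewrite Hzn. apply Rmult_le_compat_l; auto. eapply Rle_trans; [|exact HuA].
      right. f_equal. rewrite <- (lsum_ind_perm2 N Hu Tu (fun i => u i ^ 2) Pu').
      apply lsum_ext; intros. rewrite Rpow_mult_distr, pow2_abs. simpl. rewrite !Rmult_1_r, indE_sq. auto. }
    assert (C2 : lsum (seq 0 N) (fun i => Rabs (z i) * (indE (fun i => In i Hz) i * indE (fun i => In i Tu) i * Rabs (u i))) <= l2norm N z * A).
    { eapply Rle_trans. apply cauchy_schwarz. intros; apply Rabs_pos.
      intros; repeat apply Rmult_le_pos; try apply indE_ge0; apply Rabs_pos.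
      cbv beta. rewrite Hzn. apply Rmult_le_compat_l; auto. eapply Rle_trans; [|exact HzuA].
      right. f_equal. rewrite <- (lsum_ind_perm2 N Hz Tz (fun i => indE (fun i => In i Tu) i * u i ^ 2) Pz').
      apply lsum_ext; intros. rewrite !Rpow_mult_distr, pow2_abs. simpl. rewrite !Rmult_1_r, !indE_sq. ring. }
    lra. }
  assert (Tl : forall (x : vec) ix Hx Tx p, 1 < p -> Permutation (seq 0 N) ix ->
     sort_desc (map (fun i => Rabs (x i)) (seq 0 N)) = map (fun i => Rabs (x i)) ix ->
     Hx = firstn m ix -> Tx = skipn m ix -> (forall i, In i Hx -> H i) ->
     lsum (seq 0 N) (fun i => rpow ((1 - indE H i) * x i ^ 2) p) <=
     sumI (S m) N (fun i => rpow (rearr N x i) (2 * p))).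
  { intros x ix Hx Tx p Hp Px Sx EH ET HH.
    rewrite (sumI_tail N x ix (fun t => rpow t (2 * p)) m Px Sx Hm).
    assert (P2 : Permutation (seq 0 N) (Tx ++ Hx)).
    { rewrite EH, ET. eapply perm_trans. exact Px. rewrite <- (firstn_skipn m ix) at 1. apply Permutation_app_comm. }
    rewrite <- ET, <- (lsum_ind_perm2 N Tx Hx _ P2). apply lsum_le. intros i Hi.
    unfold indE at 1. destruct excluded_middle_informative as [Hh|Hh].
    - replace ((1 - 1) * x i ^ 2) with 0 by ring. rewrite rpow_0.
      apply Rmult_le_pos. apply indE_ge0. apply rpow_ge0.
    - replace ((1 - 0) * x i ^ 2) with (x i ^ 2) by ring. rewrite rpow_sq.
      rewrite indE_true. lra. apply (Permutation_in _ P2) in Hi. apply in_app_or in Hi.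
      destruct Hi; auto. exfalso; apply Hh; auto. }
  assert (Ha2 : sqrt (sumN 0 N (fun i => a i ^ 2)) <= B * Zt).
  { rewrite sumN_lsum.
    rewrite (lsum_ext _ _ (fun i => ((1 - indE H i) * z i ^ 2) * ((1 - indE H i) * u i ^ 2))).
    2:{ intros i _. unfold a. assert (E1 : (1 - indE H i) * (1 - indE H i) = 1 - indE H i).
        { unfold indE; destruct excluded_middle_informative; ring. }
        simpl. rewrite !Rmult_1_r. 
        transitivity (((1 - indE H i) * (1 - indE H i)) * (z i * z i) * (u i * u i)). ring.
        rewrite E1. transitivity ((1 - indE H i) * (1 - indE H i) * (z i * z i) * (u i * u i)).
        rewrite E1. auto. ring. }
    assert (Hnn : forall (x : vec) i, 0 <= (1 - indE H i) * x i ^ 2).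
    { intros. apply Rmult_le_pos. assert (indE H i <= 1) by apply indE_le1. lra. apply pow2_ge_0. }
    eapply Rle_trans. apply sqrt_le_1_alt. apply holder with (p := r) (q := r'); auto.
    assert (T1 := Tl z iz Hz Tz r Hr Pz Sz eq_refl eq_refl ltac:(intros; left; auto)).
    assert (T2 := Tl u iu Hu Tu r' Hr' Pu Su eq_refl eq_refl ltac:(intros; right; auto)).
    assert (r0 : 0 <= 1 / r) by (apply div_nonneg; lra).
    assert (r0' : 0 <= 1 / r') by (apply div_nonneg; lra).
    eapply Rle_trans. apply sqrt_le_1_alt. apply Rmult_le_compat; try apply rpow_ge0.
    apply rpow_le_base; [apply lsum_nonneg; intros; apply rpow_ge0|exact T1|auto].
    apply rpow_le_base; [apply lsum_nonneg; intros; apply rpow_ge0|exact T2|auto].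
    assert (Z0 : 0 <= sumI (S m) N (fun i => rpow (rearr N z i) (2 * r))).
    { unfold sumI. apply (lsum_nonneg (seq (S m) _) (fun i => rpow (rearr N z i) (2 * r))). intros; apply rpow_ge0. }
    assert (U0 : 0 <= sumI (S m) N (fun i => rpow (rearr N u i) (2 * r'))).
    { unfold sumI. apply (lsum_nonneg (seq (S m) _) (fun i => rpow (rearr N u i) (2 * r'))). intros; apply rpow_ge0. }
    rewrite <- (rpow_sq2 _ r Z0), <- (rpow_sq2 _ r' U0) by lra.
    rewrite <- Rpow_mult_distr, sqrt_pow2 by (apply Rmult_le_pos; apply rpow_ge0).
    fold Zt. rewrite Rmult_comm. apply Rmult_le_compat_r; auto. }
  apply Rle_trans with (prob N (fun e => tau * (B * Zt) < Rabs (Xs e N a))).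
  - apply prob_mono. intros e _ He. specialize (Det e). fold Zt in He. lra.
  - apply hoeffding; auto.
Qed.


Lemma lsum_const {A} (l : list A) c : lsum l (fun _ => c) = INR (length l) * c.
Proof. induction l. unfold lsum; simpl; ring. rewrite lsum_cons, IHl. simpl length.
  rewrite S_INR. ring. Qed.

Lemma prob_union_list {A} N (L : list A) (P : A -> list bool -> Prop) :
  prob N (fun e => exists a, In a L /\ P a e) <= lsum L (fun a => prob N (P a)).
Proof. induction L.
  - rewrite lsum_nil, prob_false. lra. intros e [a [[] _]].
  - rewrite lsum_cons. eapply Rle_trans; [|apply Rplus_le_compat_l; exact IHL].
    eapply Rle_trans; [|apply prob_or]. apply prob_mono. intros e _ [b [[Hb|Hb] Hp]].
    subst; left; auto. right; eauto. Qed.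

Lemma prob_union_nat N (B : nat -> list bool -> Prop) M :
  prob N (fun e => exists n, (n < M)%nat /\ B n e) <= lsum (seq 0 M) (fun n => prob N (B n)).
Proof. eapply Rle_trans; [|apply prob_union_list]. apply prob_mono.
  intros e _ [n [Hn Hb]]. exists n. split; auto. apply in_seq; lia. Qed.

Lemma fin_witness (B : nat -> list bool -> Prop) (l : list (list bool)) :
  exists M, forall e, In e l -> (exists n, B n e) -> exists n, (n < M)%nat /\ B n e.
Proof. induction l as [|e0 l [M HM]].
  - exists 0%nat. intros e [].
  - destruct (classic (exists n, B n e0)) as [[n0 Hn0]|Hn].
    + exists (Nat.max M (S n0)). intros e [He|He] Hx.
      * subst. exists n0. split; auto. lia.
      * destruct (HM e He Hx) as [n [Hn1 Hn2]]. exists n; split; auto; lia.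
    + exists M. intros e [He|He] Hx. subst; contradiction. auto.
Qed.

Lemma prob_countable N (B : nat -> list bool -> Prop) K :
  (forall M, lsum (seq 0 M) (fun n => prob N (B n)) <= K) ->
  prob N (fun e => exists n, B n e) <= K.
Proof. intros H. destruct (fin_witness B (all_signs N)) as [M HM].
  eapply Rle_trans; [|apply (H M)]. eapply Rle_trans; [|apply prob_union_nat].
  apply prob_mono. auto. Qed.

Lemma geom_sum M : lsum (seq 0 M) (fun n => (1/2) ^ (n + 2)) <= 1/2.
Proof. assert (forall M, lsum (seq 0 M) (fun n => (1/2) ^ (n + 2)) = 1/2 - (1/2)^(M+1)).
  { induction M0. unfold lsum; simpl; field. rewrite seq_S, lsum_app, IHM0. rewrite Nat.add_0_l.
    rewrite lsum_cons, lsum_nil. replace (S M0 + 1)%nat with (S (M0 + 1)) by lia.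
    replace (M0 + 2)%nat with (S (M0 + 1)) by lia. rewrite <- !tech_pow_Rmult. field. }
  rewrite H. assert (0 < (1/2)^(M+1)) by (apply pow_lt; lra). lra. Qed.

Lemma pow2_exp k : 2 ^ k <= exp (INR k).
Proof. induction k. simpl. rewrite exp_0. lra. rewrite S_INR, exp_plus. simpl.
  assert (2 <= exp 1) by (assert (H := exp_ineq1_le 1); lra).
  rewrite Rmult_comm. apply Rmult_le_compat; try lra. apply pow_le; lra. Qed.

Lemma half_pow k : exp (- INR k) <= (1/2) ^ k.
Proof. assert (H := pow2_exp k). rewrite exp_Ropp.
  replace ((1/2)^k) with (/ 2 ^ k).
  2:{ replace (1/2) with (/2) by field. rewrite pow_inv. auto. } apply Rinv_le_contravar. apply pow_lt; lra. auto.
Qed.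

Lemma nat_pow2_le k : (S k <= 2 ^ k)%nat.
Proof. induction k. simpl; lia. simpl. lia. Qed.

Lemma cv_const c : Un_cv (fun _ => c) c.
Proof. intros eps He. exists 0%nat. intros. unfold R_dist. rewrite Rminus_diag, Rabs_R0. auto. Qed.

Lemma cv_lsum (l : list nat) (X : nat -> nat -> R) (x : nat -> R) :
  (forall i, In i l -> Un_cv (fun n => X n i) (x i)) -> Un_cv (fun n => lsum l (X n)) (lsum l x).
Proof. induction l; intros H. rewrite lsum_nil. unfold lsum; simpl. apply cv_const.
  rewrite lsum_cons. apply (CV_plus (fun n => X n a) (fun n => lsum l (X n))).
  apply H; simpl; auto. apply IHl; intros; apply H; simpl; auto. Qed.

Lemma lsum_swap {A B} (l1 : list A) (l2 : list B) f :
  lsum l1 (fun i => lsum l2 (fun s => f i s)) = lsum l2 (fun s => lsum l1 (fun i => f i s)).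
Proof. induction l1. rewrite lsum_nil, lsum_const0. auto.
  rewrite lsum_cons, IHl1, <- lsum_plus. apply lsum_ext; intros; rewrite lsum_cons; auto. Qed.

Lemma sumI_mono a b N f : (a <= b)%nat -> (b <= S N)%nat -> (forall k, 0 <= f k) ->
  sumI b N f <= sumI a N f.
Proof. intros Hab Hb Hf. unfold sumI.
  change (lsum (seq b (S N - b)) f <= lsum (seq a (S N - a)) f).
  replace (S N - a)%nat with ((b - a) + (S N - b))%nat by lia. rewrite seq_app, lsum_app.
  replace (a + (b - a))%nat with b by lia.
  assert (0 <= lsum (seq a (b - a)) f) by (apply lsum_nonneg; auto). lra. Qed.


Lemma bad_w N r r' (z w : vec) jj A B tau :
  1 < r -> 1 < r' -> 1 / r + 1 / r' = 1 -> (1 <= jj)%nat -> (jj <= S N)%nat -> 0 <= tau ->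
  prob N (fun e => (sqrt (sumI 1 (jj - 1) (fun i => rearr N w i ^ 2)) <= A /\
     rpow (sumI jj N (fun i => rpow (rearr N w i) (2 * r'))) (1 / (2 * r')) <= B) /\
     2 * l2norm N z * A +
      tau * (B * rpow (sumI jj N (fun i => rpow (rearr N z i) (2 * r))) (1 / (2 * r)))
      < Rabs (sumN 0 N (fun i => sgn e i * z i * w i))) <= 2 * exp (- (tau ^ 2 / 2)).
Proof.
  intros Hr Hr' Hrr H1 H2 Ht.
  destruct (classic (sqrt (sumI 1 (jj - 1) (fun i => rearr N w i ^ 2)) <= A /\
     rpow (sumI jj N (fun i => rpow (rearr N w i) (2 * r'))) (1 / (2 * r')) <= B)) as [[HA HB]|Hn].
  - eapply Rle_trans; [|apply (pervec N r r' z w (jj - 1) A B tau); auto; try lia].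
    apply prob_mono. intros e _ [_ He]. replace (S (jj - 1)) with jj by lia. auto.
    replace (S (jj - 1)) with jj by lia. auto.
  - rewrite prob_false. assert (0 < exp (- (tau ^ 2 / 2))) by apply exp_pos. lra.
    intros e [He _]. auto.
Qed.

Lemma F_partial N s0 n (c x : nat -> R) (D : nat -> nat -> R) :
  sumN 0 N (fun i => c i * (x i + sumN s0 n (fun s => D s i))) =
  sumN 0 N (fun i => c i * x i) + sumN s0 n (fun s => sumN 0 N (fun i => c i * D s i)).
Proof. rewrite !sumN_lsum.
  rewrite (lsum_ext (seq 0 N) _ (fun i => c i * x i + lsum (seq s0 n) (fun s => c i * D s i))).
  rewrite !lsum_plus. f_equal. rewrite lsum_swap. apply lsum_ext; intros. rewrite sumN_lsum; auto.
  intros. rewrite sumN_lsum, lsum_scal. ring. Qed.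

Lemma len_exp len k : (len <= 2 ^ (2 ^ k))%nat -> INR len <= exp (2 ^ k).
Proof. intros H. apply le_INR in H. rewrite pow_INR in H. simpl (INR 2) in H.
  eapply Rle_trans. apply H. replace (1+1) with 2 by ring. eapply Rle_trans. apply pow2_exp.
  rewrite pow_INR. simpl (INR 2). replace (1+1) with 2 by ring. lra. Qed.

Lemma sq_t_sqrt t s : (t * sqrt (2 ^ s)) ^ 2 = t ^ 2 * 2 ^ s.
Proof. rewrite Rpow_mult_distr. simpl (sqrt (2^s) ^ 2). rewrite Rmult_1_r, sqrt_sqrt. ring.
  apply pow_le; lra. Qed.

Lemma numP s0 t len : 4 <= t -> (len <= 2 ^ (2 ^ s0))%nat ->
  INR len * (2 * exp (- ((t * sqrt (2 ^ s0)) ^ 2 / 2))) <= 2 * exp (- (1/8) * t ^ 2 * 2 ^ s0) * (1/2) ^ 2.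
Proof. intros Ht Hl. rewrite sq_t_sqrt. set (X := 2 ^ s0).
  assert (HX : 1 <= X) by (unfold X; apply pow_R1_Rle; lra).
  eapply Rle_trans. apply Rmult_le_compat_r. apply Rmult_le_pos. lra. apply Rlt_le, exp_pos.
  apply len_exp; eauto. fold X.
  eapply Rle_trans; [|apply Rmult_le_compat_l; [apply Rmult_le_pos; [lra|apply Rlt_le, exp_pos]|apply (half_pow 2)]].
  replace (exp X * (2 * exp (- (t ^ 2 * X / 2)))) with (2 * exp (X - t^2 * X / 2)) by (unfold Rminus; rewrite exp_plus; ring).
  rewrite Rmult_assoc, <- exp_plus. apply Rmult_le_compat_l. lra. apply exp_le_mono.
  simpl INR. assert (16 <= t ^ 2) by nra. assert (16 * X <= t^2 * X) by nra. nra.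
Qed.

Lemma numD s0 n t len1 len2 : 4 <= t -> (len1 <= 2 ^ (2 ^ S (s0 + n)))%nat -> (len2 <= 2 ^ (2 ^ (s0 + n)))%nat ->
  INR len1 * (INR len2 * (2 * exp (- ((t * sqrt (2 ^ (s0 + n))) ^ 2 / 2))))
   <= 2 * exp (- (1/8) * t ^ 2 * 2 ^ s0) * (1/2) ^ (n + 2).
Proof. intros Ht H1 H2. rewrite sq_t_sqrt.
  assert (E1 := len_exp _ _ H1). assert (E2 := len_exp _ _ H2).
  set (X0 := 2 ^ s0). set (X := 2 ^ (s0 + n)).
  assert (HX0 : 1 <= X0) by (unfold X0; apply pow_R1_Rle; lra).
  assert (HXe : 2 ^ S (s0 + n) = 2 * X) by (unfold X; simpl; ring).
  rewrite HXe in E1. fold X in E2.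
  assert (HXX : X = X0 * 2 ^ n) by (unfold X, X0; rewrite pow_add; auto).
  assert (Hn : INR n + 1 <= 2 ^ n).
  { assert (H := nat_pow2_le n). apply le_INR in H. rewrite pow_INR, S_INR in H. simpl (INR 2) in H.
    replace (1+1) with 2 in H by ring. lra. }
  assert (HX1 : X0 <= X) by (rewrite HXX; assert (1 <= 2 ^ n) by (apply pow_R1_Rle; lra); nra).
  assert (HX2 : INR n + 1 <= X) by (rewrite HXX; nra).
  assert (0 <= INR len2) by apply pos_INR.
  eapply Rle_trans. apply Rmult_le_compat. apply pos_INR. 
  apply Rmult_le_pos; auto. apply Rmult_le_pos; [lra|apply Rlt_le, exp_pos]. exact E1.
  apply Rmult_le_compat_r. apply Rmult_le_pos; [lra|apply Rlt_le, exp_pos]. exact E2.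
  eapply Rle_trans; [|apply Rmult_le_compat_l; [apply Rmult_le_pos; [lra|apply Rlt_le, exp_pos]|apply (half_pow (n+2))]].
  replace (exp (2 * X) * (exp X * (2 * exp (- (t ^ 2 * X / 2))))) with (2 * exp (2 * X + X + - (t ^ 2 * X / 2))) by (rewrite !exp_plus; ring).
  rewrite Rmult_assoc, <- exp_plus. apply Rmult_le_compat_l. lra. apply exp_le_mono.
  rewrite plus_INR. simpl (INR 2). assert (16 <= t ^ 2) by nra. assert (16 * X <= t^2 * X) by nra.
  assert (t ^ 2 * X0 <= t ^ 2 * X) by nra. nra.
Qed.


Theorem mainTheorem5 :
  exists c : R, 0 < c /\
  forall (N : nat) (r r' : R), 1 < r -> 1 < r' -> 1 / r + 1 / r' = 1 ->
  forall (z : vec), inRN N z ->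
  forall (V : vec -> Prop) (s0 : nat) (Vs : nat -> vec -> Prop)
         (pi : nat -> vec -> vec) (nms : nat -> vec -> R) (nm : vec -> R)
         (j : nat -> nat),
  StructA N r' V s0 Vs pi nms nm j ->
  forall Lam Th : R,
  is_lub (Lambda_set V s0 pi nms) Lam ->
  is_lub (Theta_set V s0 pi nm) Th ->
  forall t : R, 4 <= t ->
  prob N (fun e => forall v, V v ->
     Rabs (sumN 0 N (fun i => sgn e i * z i * v i))
       <= 2 * l2norm N z * Lam
          + t * Th * rpow (INR N) (1 / (2 * r'))
            * rpow (sumI (j s0) N (fun i => rpow (rearr N z i) (2 * r))) (1 / (2 * r)))
  >= 1 - 2 * exp (- c * t ^ 2 * 2 ^ s0).
Proof.
  exists (1/8). split; [lra|].
  intros N r r' Hr Hr' Hrr z Hz V s0 Vs pi nms nm j HS Lam Th HLam HTh t Ht.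
  destruct HS as [HVin [HVs [_ [Hcard [Hpi [Hconv [Hnms [Hnm [Hjmono [Hjb Hcond]]]]]]]]]].
  assert (HL : exists L : nat -> list vec, forall s, (length (L s) <= 2 ^ (2 ^ s))%nat /\
            (forall x, Vs s x -> In x (L s))).
  { exists (fun s => proj1_sig (constructive_indefinite_description _ (Hcard s))).
    intros s. destruct (constructive_indefinite_description _ (Hcard s)) as [l Hl]. simpl. auto. }
  destruct HL as [L HL].
  set (Rn := rpow (INR N) (1 / (2 * r'))).
  set (Zs := fun s => rpow (sumI (j s) N (fun i => rpow (rearr N z i) (2 * r))) (1 / (2 * r))).
  set (Cnd := fun s w => sqrt (sumI 1 (j s - 1) (fun i => rearr N w i ^ 2)) <= nms s w /\
     rpow (sumI (j s) N (fun i => rpow (rearr N w i) (2 * r'))) (1 / (2 * r')) <= nm w * Rn).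
  set (F := fun e (w : vec) => sumN 0 N (fun i => sgn e i * z i * w i)).
  set (bad := fun s w e => 2 * l2norm N z * nms s w + (t * sqrt (2 ^ s)) * (nm w * Rn * Zs s) < Rabs (F e w)).
  set (BadP := fun e => exists w, In w (L s0) /\ (Cnd s0 w /\ bad s0 w e)).
  set (BadD := fun n e => exists a, In a (L (S (s0 + n)%nat)) /\ exists b, In b (L (s0 + n)%nat) /\
        (Cnd (s0 + n)%nat (vsub a b) /\ bad (s0 + n)%nat (vsub a b) e)).
  set (E := exp (- (1/8) * t ^ 2 * 2 ^ s0)).
  assert (HE : 0 < E) by apply exp_pos.
  assert (Hbw : forall s w, (s0 <= s)%nat -> prob N (fun e => Cnd s w /\ bad s w e) <= 2 * exp (- ((t * sqrt (2 ^ s)) ^ 2 / 2))).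
  { intros s w Hs. destruct (Hjb s Hs) as [Hj1 Hj2].
    assert (H := bad_w N r r' z w (j s) (nms s w) (nm w * Rn) (t * sqrt (2 ^ s)) Hr Hr' Hrr Hj1 Hj2
        ltac:(apply Rmult_le_pos; [lra|apply sqrt_pos])).
    eapply Rle_trans; [|exact H]. apply prob_mono. intros e _ [H1 H2]. split; auto.
    }
  assert (PB1 : prob N BadP <= 2 * E * (1/2) ^ 2).
  { eapply Rle_trans. apply prob_union_list.
    eapply Rle_trans. apply lsum_le. intros w _. apply (Hbw s0 w); lia.
    rewrite lsum_const. apply numP; auto. apply HL. }
  assert (PB2 : forall n, prob N (BadD n) <= 2 * E * (1/2) ^ (n + 2)).
  { intros n. eapply Rle_trans. apply prob_union_list.
    eapply Rle_trans. apply lsum_le. intros a _. apply prob_union_list.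
    eapply Rle_trans. apply lsum_le. intros a _. apply lsum_le. intros b _. apply (Hbw (s0 + n)%nat). lia.
    rewrite (lsum_ext _ _ (fun _ => INR (length (L (s0 + n)%nat)) * (2 * exp (- ((t * sqrt (2 ^ (s0 + n))) ^ 2 / 2))))).
    2:{ intros; apply lsum_const. }
    rewrite lsum_const. apply numD; auto; apply HL. }
  assert (PB : prob N (fun e => BadP e \/ exists n, BadD n e) <= 2 * E).
  { eapply Rle_trans. apply prob_or.
    assert (prob N (fun e => exists n, BadD n e) <= E).
    { apply prob_countable. intros M. eapply Rle_trans. apply lsum_le. intros n _. apply PB2.
      rewrite lsum_scal. assert (H := geom_sum M). nra. }
    simpl in PB1. lra. }
  assert (Det : forall e, ~ (BadP e \/ exists n, BadD n e) -> forall v, V v ->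
     Rabs (sumN 0 N (fun i => sgn e i * z i * v i)) <= 2 * l2norm N z * Lam + t * Th * Rn * Zs s0).
  { intros e HnB v Hv.
    assert (HnP : ~ BadP e) by tauto.
    assert (HnD : forall n, ~ BadD n e) by (intros n Hn; apply HnB; right; eauto).
    assert (Hl2 : 0 <= l2norm N z) by apply sqrt_pos.
    assert (HRn : 0 <= Rn) by apply rpow_ge0.
    assert (HZ0 : 0 <= Zs s0) by apply rpow_ge0.
    assert (Hin : forall s, inRN N (pi s v)) by (intros s; apply HVin, (HVs s), Hpi; auto).
    assert (HinD : forall s, inRN N (vsub (pi (S s) v) (pi s v))).
    { intros s i Hi. unfold vsub. rewrite (Hin (S s) i Hi), (Hin s i Hi). ring. }
    assert (Hnm0 : forall w, inRN N w -> 0 <= nm w) by (intros; apply Hnm; auto).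
    assert (HZs : forall s, (s0 <= s)%nat -> Zs s <= Zs s0).
    { intros s Hs. unfold Zs. apply rpow_le_base.
      unfold sumI. apply (lsum_nonneg (seq _ _) (fun i => rpow (rearr N z i) (2 * r))). intros; apply rpow_ge0.
      apply sumI_mono. apply Hjmono; lia. apply Hjb; lia. intros; apply rpow_ge0.
      apply div_nonneg; lra. }
    assert (BndP : Rabs (F e (pi s0 v)) <= 2 * l2norm N z * nms s0 (pi s0 v) +
                    t * Rn * Zs s0 * (sqrt (2 ^ s0) * nm (pi s0 v))).
    { apply Rnot_lt_le. intros Hb. apply HnP. exists (pi s0 v). split.
      apply HL, Hpi; auto. split.
      - destruct (Hcond s0 v (Nat.le_refl _) Hv) as [_ [_ [C1 C2]]]. split; auto.
      - unfold bad. eapply Rle_lt_trans; [|exact Hb]. right. ring. }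
    assert (BndD : forall s, (s0 <= s)%nat -> Rabs (F e (vsub (pi (S s) v) (pi s v))) <=
         2 * l2norm N z * nms s (vsub (pi (S s) v) (pi s v)) +
         t * Rn * Zs s0 * (sqrt (2 ^ s) * nm (vsub (pi (S s) v) (pi s v)))).
    { intros s Hs. assert (Hbd : ~ bad s (vsub (pi (S s) v) (pi s v)) e).
      { intros Hb. apply (HnD (s - s0)%nat). unfold BadD. replace (s0 + (s - s0))%nat with s by lia.
        exists (pi (S s) v). split. apply HL, Hpi; auto. exists (pi s v). split. apply HL, Hpi; auto.
        split; auto. destruct (Hcond s v Hs Hv) as [C1 [C2 _]]. split; auto. }
      apply Rnot_lt_le in Hbd.
      assert (0 <= t * sqrt (2 ^ s) * (nm (vsub (pi (S s) v) (pi s v)) * Rn)).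
      { repeat apply Rmult_le_pos; try lra; auto. apply sqrt_pos. }
      assert (t * sqrt (2 ^ s) * (nm (vsub (pi (S s) v) (pi s v)) * Rn) * Zs s <=
              t * sqrt (2 ^ s) * (nm (vsub (pi (S s) v) (pi s v)) * Rn) * Zs s0).
      { apply Rmult_le_compat_l; auto. }
      eapply Rle_trans. exact Hbd. 
      replace (t * sqrt (2 ^ s) * (nm (vsub (pi (S s) v) (pi s v)) * Rn * Zs s)) with
        (t * sqrt (2 ^ s) * (nm (vsub (pi (S s) v) (pi s v)) * Rn) * Zs s) by ring. lra. }
    set (P := fun n i => pi s0 v i + sumN s0 n (fun s => vsub (pi (S s) v) (pi s v) i)).
    set (K := 2 * l2norm N z * Lam + t * Th * Rn * Zs s0).
    assert (HFP : forall n, F e (P n) = F e (pi s0 v) + sumN s0 n (fun s => F e (vsub (pi (S s) v) (pi s v)))).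
    { intros n. unfold F, P. 
      rewrite (sumN_lsum 0 N (fun i => sgn e i * z i * _)).
      rewrite <- sumN_lsum. rewrite F_partial. auto. }
    assert (HB : forall n, Rabs (F e (P n)) <= K).
    { intros n. rewrite HFP. eapply Rle_trans. apply Rabs_triang.
      eapply Rle_trans. apply Rplus_le_compat_l. rewrite sumN_lsum. apply lsum_abs.
      eapply Rle_trans. apply Rplus_le_compat. exact BndP. apply lsum_le. intros s Hs.
      apply BndD. apply in_seq in Hs. lia.
      rewrite lsum_plus, !lsum_scal.
      assert (HLn : sumN s0 n (fun s => nms s (vsub (pi (S s) v) (pi s v))) + nms s0 (pi s0 v) <= Lam).
      { destruct HLam as [Hub _]. apply Hub. exists v, n. split; auto. }
      assert (HTn : sumN s0 n (fun s => sqrt (2 ^ s) * nm (vsub (pi (S s) v) (pi s v))) + sqrt (2 ^ s0) * nm (pi s0 v) <= Th).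
      { destruct HTh as [Hub _]. apply Hub. exists v, n. split; auto. }
      rewrite !sumN_lsum in HLn, HTn. unfold K.
      assert (0 <= t * Rn * Zs s0) by (repeat apply Rmult_le_pos; lra).
      assert (H1 := Rmult_le_compat_l _ _ _ Hl2 HLn). assert (H2 := Rmult_le_compat_l _ _ _ H HTn).
      nra. }
    assert (Hcv : Un_cv (fun n => F e (P n)) (F e v)).
    { unfold F. apply cv_lsum. intros i _. apply (CV_mult (fun _ => sgn e i * z i) (fun n => P n i)).
      apply cv_const. apply Hconv; auto. }
    assert (Hcva := cv_cvabs _ _ Hcv).
    change (Rabs (F e v) <= K).
    eapply Rle_cv_lim; [intros n; apply (HB n) | exact Hcva | apply cv_const]. }
  match goal with |- prob N ?P >= _ => assert (Hc := prob_compl N P);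
    assert (Hn : prob N (fun e => ~ P e) <= 2 * E) end.
  { eapply Rle_trans; [|exact PB]. apply prob_mono. intros e _ He.
    destruct (classic (BadP e \/ exists n, BadD n e)); auto. exfalso. apply He. apply Det; auto. }
  fold E. lra.
Qed.
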